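(* Let $\mu$ be a distribution on $\{0,1\}^{\mathbb{N}}$ and let $X=(X_i)_{i\in\mathbb{N}}\sim\mu$ be defined on a probability space $(\Omega,\mathcal{F},\mathbb{P})$. Then $\mu$ satisfies condition (SC) if and only if it satisfies condition (SC'), where: (SC): $(\mathbb{N},\xi)$ is totally bounded and there exists $K\ge1$ such that for every $\varepsilon>0$ there exist events $(E_k)_{k\in\mathbb{N}}$ in $\mathcal{F}$ and a finite set $J\subset\mathbb{N}$ with (1) $\mathbb{P}(E_k)\le\varepsilon$ for all $k$; (2) $\sup_{k}\frac{\log(k+1)}{\log(1/\mathbb{P}(E_k))}<\infty$; (3) for every $i\in\mathbb{N}$ there exist $j\in J$ and $\mathcal{K}\subset\mathbb{N}$ with $|\mathcal{K}|\le K$ and $\{X_i\neq X_j\}\subset\bigcup_{k\in\mathcal{K}}E_k$. (SC'): $(\mathbb{N},\xi)$ is totally bounded and there exists $K\ge1$ such that for every $\varepsilon>0$ there exist events $(E_k)_{k\in\mathbb{N}}$ in $\mathcal{F}$ and a finite sequence of random variables $(Z_j)_{j\in[J]}$ on $(\Omega,\mathcal{F},\mathbb{P})$ with (1) $\mathbb{P}(E_k)\le\varepsilon$ for all $k$; (2) $\sup_{k}\frac{\log(k+1)}{\log(1/\mathbb{P}(E_k))}<\infty$; (3) for every $i\in\mathbb{N}$ there exist $j\in[J]$ and $\mathcal{K}\subset\mathbb{N}$ with $|\mathcal{K}|\le K$ and $\{X_i\neq Z_j\}\subset\bigcup_{k\in\mathcal{K}}E_k$.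
   Context: $\xi(i,j):=\mathbb{P}(X_i\neq X_j)$; $(\mathbb{N},\xi)$ is totally bounded if for every $\varepsilon>0$ there is a finite $S\subset\mathbb{N}$ such that every $i$ has $s\in S$ with $\xi(i,s)\le\varepsilon$. $[J]=\{1,\dots,J\}$; $\log(1/0)=\infty$. *)

(* Defs.v *)
From HB Require Import structures.
From mathcomp Require Import all_boot all_order all_algebra finmap.
From mathcomp Require Import all_classical all_reals all_analysis.
Set Implicit Arguments. Unset Strict Implicit. Unset Printing Implicit Defensive.
Import Order.TTheory GRing.Theory Num.Theory.
Local Open Scope classical_set_scope.
Local Open Scope ring_scope.
Local Open Scope ereal_scope.

Definition xi d (T : measurableType d) (R : realType) (P : probability T R)
  (X : nat -> T -> bool) (i j : nat) : \bar R :=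
  P [set w | X i w != X j w].

Definition totally_bounded_xi d (T : measurableType d) (R : realType)
  (P : probability T R) (X : nat -> T -> bool) : Prop :=
  forall eps : R, (0 < eps)%R ->
    exists S : {fset nat}, forall i : nat,
      exists2 s, s \in S & xi P X i s <= eps%:E.

(* log(k+1)/log(1/p), with log(1/0) = +oo (so the ratio is 0 when p = 0),
   and extended-real division (x/0 = +oo for x > 0, 0/0 = 0) when p = 1. *)
Definition log_ratio (R : realType) (k : nat) (p : R) : \bar R :=
  if p == 0%R then 0
  else (ln (k.+1%:R : R))%:E * ((ln (p^-1))%:E)^-1.

Definition good_events d (T : measurableType d) (R : realType)
  (P : probability T R) (eps : R) (E : nat -> set T) : Prop :=
  (forall k, measurable (E k)) /\
  (forall k, P (E k) <= eps%:E) /\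
  ereal_sup (range (fun k => log_ratio k (fine (P (E k))))) < +oo.

Definition SC d (T : measurableType d) (R : realType)
  (P : probability T R) (X : nat -> T -> bool) : Prop :=
  totally_bounded_xi P X /\
  exists K : nat, (1 <= K)%N /\
    forall eps : R, (0 < eps)%R ->
      exists (E : nat -> set T) (J : {fset nat}),
        good_events P eps E /\
        forall i : nat, exists2 j, j \in J &
          exists Ks : {fset nat}, (#|` Ks| <= K)%N /\
            [set w | X i w != X j w] `<=` \bigcup_(k in [set` Ks]) E k.

Definition SC' d (T : measurableType d) (R : realType)
  (P : probability T R) (X : nat -> T -> bool) : Prop :=
  totally_bounded_xi P X /\
  exists K : nat, (1 <= K)%N /\
    forall eps : R, (0 < eps)%R ->
      exists (E : nat -> set T) (J : nat) (Z : 'I_J -> T -> bool),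
        (forall j, measurable_fun setT (Z j)) /\
        good_events P eps E /\
        forall i : nat, exists j : 'I_J,
          exists Ks : {fset nat}, (#|` Ks| <= K)%N /\
            [set w | X i w != Z j w] `<=` \bigcup_(k in [set` Ks]) E k.

(* Main.v *)
Require Import Defs.
From HB Require Import structures.
From mathcomp Require Import all_boot all_order all_algebra finmap.
From mathcomp Require Import all_classical all_reals all_analysis.
Set Implicit Arguments. Unset Strict Implicit. Unset Printing Implicit Defensive.
Local Open Scope classical_set_scope.

Theorem proposition20 (d : measure_display) (T : measurableType d)
  (R : realType) (P : probability T R) (X : nat -> T -> bool)
  (hX : forall i, measurable_fun setT (X i)) :
  SC P X <-> SC' P X.
Proof.
split.
- move=> [tb [K [K1 H]]]; split => //; exists K; split => // eps eps0.
  have [E [J [gE HJ]]] := H eps eps0.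
  exists E, (size (J : seq nat)), (fun j => X (nth 0%N (J : seq nat) j)).
  split; first by move=> j; exact: hX.
  split => // i.
  have [j jJ [Ks [cK sub]]] := HJ i.
  have jJ' : j \in (J : seq nat) by [].
  have lt : (index j (J : seq nat) < size (J : seq nat))%N by rewrite index_mem.
  exists (Ordinal lt), Ks; split => //=.
  by rewrite nth_index.
- move=> [tb [K [K1 H]]]; split => //; exists (K + K)%N; split.
    by rewrite (leq_trans K1) // leq_addr.
  move=> eps eps0.
  have [E [J [Z [mZ [gE HJ]]]]] := H eps eps0.
  pose Q i (j : 'I_J) := exists Ks : {fset nat}, (#|` Ks| <= K)%N /\
            [set w | X i w != Z j w] `<=` \bigcup_(k in [set` Ks]) E k.
  pose f (j : 'I_J) : nat := match pselect (exists i, Q i j) with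
    | left h => projT1 (cid h) | right _ => 0%N end.
  have fQ : forall i j, Q i j -> Q (f j) j.
    move=> i j Qij; rewrite /f; case: pselect => [h|[]]; last by exists i.
    exact: (projT2 (cid h)).
  exists E, [fset f j | j in 'I_J]%fset; split => // i.
  have [j Qij] := HJ i.
  have [Ks2 [cK2 sub2]] := fQ _ _ Qij.
  case: Qij => Ks [cK sub].
  exists (f j); first by rewrite in_imfset.
  exists (Ks `|` Ks2)%fset; split.
    rewrite (leq_trans (leq_card_fsetU _ _)) //; exact: leq_add.
  move=> w /= Hw.
  case E1: (X i w != Z j w).
    have [k kK Ek] := sub w E1.
    by exists k => //=; rewrite inE kK.
  move/negbFE/eqP: E1 => E1.
  have E2 : X (f j) w != Z j w by rewrite -E1 eq_sym.
  have [k kK Ek] := sub2 w E2.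
  by exists k => //=; rewrite inE kK orbT.
Qed.
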